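(* Let $k,l,m,n$ be positive integers with $k^n\equiv 1\pmod m$ and $l(k-1)\equiv0\pmod m$, let $G=\langle a,b;\ a^m=1,\ b^n=a^l,\ b^{-1}ab=a^k\rangle$, and let $R=\{k^j-1 \bmod m: j\in\mathbb{Z}_n\}$ and $L=\{1-k^j \bmod m: j\in\mathbb{Z}_n\}$. Then (i) $0\in R$ and $0\in L$; and (ii) if $n=\mathrm{ind}_m(k)$, the following are equivalent: (a) the centre of $G$ is trivial; (b) $R$ contains an element invertible in $\mathbb{Z}_m$; (c) $L$ contains an element invertible in $\mathbb{Z}_m$.
   Context: $\mathrm{ind}_m(k)$ is the least positive integer $d$ with $k^d\equiv 1\pmod m$. *)

(* Defs.v *)
From HB Require Import structures.
From mathcomp Require Import all_boot all_order all_algebra all_fingroup all_solvable.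
Set Implicit Arguments. Unset Strict Implicit. Unset Printing Implicit Defensive.
Import GRing.Theory Num.Theory.

Definition is_ind (m k n : nat) : Prop :=
  [/\ 0 < n, k ^ n = 1 %[mod m]
    & forall d, 0 < d -> k ^ d = 1 %[mod m] -> n <= d]%N.

(* R = { k^j - 1 mod m : j in Z_n },  L = { 1 - k^j mod m : j in Z_n },
   represented as residues in [0, m) (as integers); j ranges over 0..n-1. *)
Definition Rset (k m n : nat) : seq int :=
  [seq (((k%:Z ^+ j - 1) %% m%:Z)%Z)%R | j <- iota 0 n].
Definition Lset (k m n : nat) : seq int :=
  [seq (((1 - k%:Z ^+ j) %% m%:Z)%Z)%R | j <- iota 0 n].

Definition unit_mod (m : nat) (r : int) : bool := coprimez r m%:Z.

(* Main.v *)
Require Import Defs.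
From mathcomp Require Import all_boot all_order all_algebra all_fingroup all_solvable.
Import GRing.Theory Num.Theory.

Lemma mod_cancel_mul (k M i i' : nat) : coprime k M ->
  i * k = i' * k %[mod M] -> i = i' %[mod M].
Proof.
move=> ck.
wlog le : i i' / i <= i'.
  move=> W; case: (leqP i i') => h; first exact: W.
  by move=> /esym E; apply/esym; apply: W => //; apply: ltnW.
move=> /eqP; rewrite eq_sym eqn_mod_dvd ?leq_mul2r ?le ?orbT // -mulnBl.
rewrite Gauss_dvdl; last by rewrite coprime_sym.
by rewrite -eqn_mod_dvd // eq_sym => /eqP.
Qed.

Section Conc.
Variables (n' m' k l : nat).
Local Notation N := n'.+1.
Local Notation M := m'.+1.
Hypothesis kn : k ^ N = 1 %[mod M].
Hypothesis lk : l * (k - 1) = 0 %[mod M].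
Hypothesis kpos : 0 < k.

Definition X := ('I_N * 'I_M)%type.
Definition mk (j i : nat) : X := (inord (j %% N), inord (i %% M)).

Lemma mk1 j i : ((mk j i).1 : nat) = j %% N.
Proof. by rewrite /= inordK // ltnS -ltnS ltn_pmod. Qed.
Lemma mk2 j i : ((mk j i).2 : nat) = i %% M.
Proof. by rewrite /= inordK // ltnS -ltnS ltn_pmod. Qed.

Lemma mkE j i j' i' : j = j' %[mod N] -> i = i' %[mod M] -> mk j i = mk j' i'.
Proof. by rewrite /mk => -> ->. Qed.

Lemma mk_inj j i j' i' : mk j i = mk j' i' -> j = j' %[mod N] /\ i = i' %[mod M].
Proof.
move=> E; have := congr1 (fun x : X => (x.1 : nat)) E.
have := congr1 (fun x : X => (x.2 : nat)) E.
by rewrite !mk1 !mk2 => -> ->.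
Qed.

Lemma mk_id (x : X) : mk x.1 x.2 = x.
Proof.
case: x => j i; rewrite /mk /= !modn_small //.
by congr pair; apply: val_inj; rewrite /= inordK // -ltnS.
Qed.

Lemma ck : coprime k M.
Proof.
rewrite -(coprime_pexpl _ _ (ltn0Sn n')) -coprime_modl kn coprime_modl.
exact: coprime1n.
Qed.

Definition Af (x : X) : X := mk x.1 (x.2 + 1).
Definition Bf (x : X) : X :=
  if (x.1 < n')%N then mk x.1.+1 (x.2 * k) else mk 0 (x.2 * k + l).

Lemma Af_inj : injective Af.
Proof.
move=> x y /mk_inj [e1 e2]; rewrite -(mk_id x) -(mk_id y); apply: mkE => //.
by move/eqP: e2; rewrite eqn_modDr => /eqP.
Qed.

Lemma Bf_inj : injective Bf.
Proof.
move=> x y; rewrite /Bf.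
have hx := ltn_ord x.1; have hy := ltn_ord y.1.
case: ltnP => h1; case: ltnP => h2 /mk_inj [e1 e2].
- rewrite -(mk_id x) -(mk_id y); apply: mkE.
    by move: e1; rewrite !modn_small ?ltnS // => -[->].
  exact: mod_cancel_mul ck e2.
- by move: e1; rewrite !modn_small ?ltnS.
- by move: e1; rewrite !modn_small ?ltnS.
- rewrite -(mk_id x) -(mk_id y); apply: mkE.
    have ex : (x.1 : nat) = n' by apply/eqP; rewrite eqn_leq h1 -ltnS hx.
    have ey : (y.1 : nat) = n' by apply/eqP; rewrite eqn_leq h2 -ltnS hy.
    by rewrite ex ey.
  apply: mod_cancel_mul ck _.
  by move/eqP: e2; rewrite eqn_modDr => /eqP.
Qed.

Definition A : {perm X} := perm Af_inj.
Definition B : {perm X} := perm Bf_inj.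

Lemma AX t (x : X) : (A ^+ t)%g x = mk x.1 (x.2 + t).
Proof.
rewrite permX; elim: t => [|t IH] /=; first by rewrite addn0 mk_id.
rewrite IH permE /Af; apply: mkE; first by rewrite mk1 modn_mod.
by rewrite mk2 modnDml -addnA addn1 addnS.
Qed.

Lemma BX t (x : X) : x.1 + t <= n' -> (B ^+ t)%g x = mk (x.1 + t) (x.2 * k ^ t).
Proof.
rewrite permX; elim: t => [|t IH] /= h; first by rewrite addn0 muln1 mk_id.
rewrite IH ?(leq_trans _ h) ?leq_add2l // permE /Bf mk1 modn_small; last first.
  by rewrite ltnS (leq_trans _ h) // leq_add2l.
rewrite ifT; last by rewrite -addnS.
apply: mkE; first by rewrite addnS.
by rewrite mk2 modnMml expnS mulnA [_ * k]mulnC mulnA [k * x.2]mulnC.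
Qed.

Lemma lkj j : l * k ^ j = l %[mod M].
Proof.
elim: j => [|j IH]; first by rewrite muln1.
have lk' : l * k = l %[mod M].
  have e : k = (k - 1) + 1 by rewrite subnK.
  by rewrite e mulnDr muln1 -modnDml lk.
by rewrite expnS mulnA -modnMml lk' modnMml IH.
Qed.

Lemma modE y c d e : ((y %% M) * c + d) * e = (y * c + d) * e %[mod M].
Proof.
have h : (y %% M * c + d) = (y * c + d) %[mod M] by rewrite -modnDml modnMml modnDml.
by rewrite -modnMml h modnMml.
Qed.

Lemma BN (x : X) : (B ^+ N)%g x = (A ^+ l)%g x.
Proof.
have hx := ltn_ord x.1.
have e : N = (n' - x.1).+1 + x.1 by rewrite addSn subnK // -ltnS.
have -> : (B ^+ N = B ^+ (n' - x.1).+1 * B ^+ x.1)%g by rewrite -expgD -e.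
rewrite permM AX expgSr permM.
rewrite (BX (n' - x.1)); last by rewrite subnKC // -ltnS.
rewrite permE /Bf mk1 modn_small ?subnKC ?ltnn // -?ltnS //.
rewrite BX; last by rewrite mk1 mod0n add0n -ltnS.
apply: mkE; first by rewrite mk1 mod0n add0n ?modn_mod.
rewrite !mk2 modnMml modE mulnDl -(mulnA x.2) -expnSr -mulnA -expnD.
rewrite -modnDm lkj -e.
by rewrite -modnMmr kn modnMmr muln1 modnDm.
Qed.

Lemma AM : (A ^+ M = 1)%g.
Proof.
by apply/permP => x; rewrite AX perm1 -{3}(mk_id x); apply: mkE => //; rewrite modnDr.
Qed.

Lemma AB : (A ^ B = A ^+ k)%g.
Proof.
have E : (A * B = B * A ^+ k)%g.
  apply/permP => x; rewrite !permM AX !permE /Af /Bf mk1 modn_small //.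
  case: ifP => _; rewrite !mk1 !mk2; apply: mkE => //; rewrite ?modn_mod //.
    by rewrite modnMml modnDml mulnDl mul1n.
  by rewrite modnDml -modnDml modnMml modnDml mulnDl mul1n addnAC.
by rewrite conjgE E mulgA mulVg mul1g.
Qed.

Definition H := (<[A]> <*> <[B]>)%G.

Lemma H_hom : (H \homg Grp (a : b : (a ^+ M = 1, b ^+ N = a ^+ l, a ^ b = a ^+ k)))%g.
Proof.
apply/existsP; exists (A, B); rewrite /= !xpair_eqE /= eqxx AM eqxx AB eqxx /=.
by rewrite andbT; apply/eqP/permP => x; rewrite BN.
Qed.

Lemma H_card : N * M <= #|H|.
Proof.
pose x0 : X := mk 0 0.
have sub : [set: X] \subset (fun h : {perm X} => h x0) @: H.
  apply/subsetP => x _; apply/imsetP; exists (B ^+ x.1 * A ^+ x.2)%g.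
    by rewrite groupM ?groupX // mem_gen // inE cycle_id ?orbT.
  rewrite permM AX BX; last by rewrite mk1 mod0n add0n -ltnS.
  rewrite /x0 -{1}(mk_id x); apply: mkE; first by rewrite !mk1 mod0n add0n modn_mod.
  by rewrite !mk2 mod0n.
have := subset_leq_card sub; rewrite cardsT card_prod !card_ord => h.
exact: leq_trans h (leq_imset_card _ _).
Qed.

End Conc.


Lemma kj1_dvd k j : 0 < k -> (k - 1) %| (k ^ j - 1).
Proof.
move=> k0; rewrite -eqn_mod_dvd ?expn_gt0 ?k0 //.
have e : k = 1 + (k - 1) by rewrite addnC subnK.
by rewrite -modnXm {1}e modnDr modnXm exp1n.
Qed.

Lemma unitR k m j : 0 < k ->
  unit_mod m (((k%:Z ^+ j - 1) %% m%:Z)%Z)%R = coprime (k ^ j - 1) m.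
Proof.
move=> k0; rewrite /unit_mod coprimezE.
have -> : (((k%:Z ^+ j - 1) %% m%:Z)%Z = ((k ^ j - 1) %% m)%N :> int)%R.
  have eX : (k%:Z ^+ j = (k ^ j)%N :> int)%R by rewrite -!natz natrX.
  by rewrite eX subzn ?expn_gt0 ?k0 // modz_nat.
by rewrite !absz_nat coprime_modl.
Qed.

Lemma unitL k m j : 0 < k ->
  unit_mod m (((1 - k%:Z ^+ j) %% m%:Z)%Z)%R = coprime (k ^ j - 1) m.
Proof.
move=> k0; rewrite -unitR // /unit_mod /coprimez !gcdz_modl.
by rewrite -opprB gcdNz.
Qed.

Lemma hasR k m n : 0 < k -> 0 < n -> k ^ n = 1 %[mod m] ->
  has (unit_mod m) (Rset k m n) = coprime (k - 1) m.
Proof.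
move=> k0 n0 kn; rewrite has_map.
rewrite (eq_has (a2 := fun j => coprime (k ^ j - 1) m)); last by move=> j; apply: unitR.
apply/idP/idP.
  by move=> /hasP [j _ c]; apply: coprime_dvdl c; apply: kj1_dvd.
move=> c; apply/hasP; exists (1 %% n); first by rewrite mem_iota add0n ltn_pmod.
have e : k ^ (1 %% n) = k %[mod m].
  case: n n0 kn => // -[|n] _ kn; first by rewrite modnn expn0 -kn expn1.
  by rewrite (@modn_small 1) // expn1.
rewrite -coprime_modl.
have e2 : k ^ (1 %% n) - 1 = k - 1 %[mod m].
  apply/eqP; rewrite -(eqn_modDr 1) !subnK ?expn_gt0 ?k0 //; exact/eqP.
by rewrite e2 coprime_modl.
Qed.

Lemma hasL k m n : 0 < k ->
  has (unit_mod m) (Lset k m n) = has (unit_mod m) (Rset k m n).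
Proof.
move=> k0; rewrite !has_map; apply: eq_has => j /=.
by rewrite unitL // unitR.
Qed.

Section Grp.
Local Open Scope group_scope.

Lemma card_bound (gT : finGroupType) (G : {group gT}) (a b : gT) k l n :
  0 < n -> <[a]> <*> <[b]> = G -> b ^+ n = a ^+ l -> a ^ b = a ^+ k ->
  #|G| <= #[a] * n.
Proof.
move=> n0 Ga bn ab.
have nab : <[b]> \subset 'N(<[a]>).
  by rewrite cycle_subG inE -cycleJ ab cycle_subG mem_cycle.
rewrite -Ga norm_joinEr //.
have M := mul_cardG <[a]> <[b]>.
have I0 := cardG_gt0 (<[a]> :&: <[b]>)%G.
have hb : #[b] <= n * #|<[a]> :&: <[b]>|.
  apply: (@leq_trans (n * #[b ^+ n])).
    rewrite orderXgcd mulnC.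
    rewrite -{1}(divnK (dvdn_gcdl #[b] n)) leq_mul2l.
    by rewrite dvdn_leq ?dvdn_gcdr ?orbT.
  rewrite leq_mul2l; apply/orP; right; apply: subset_leq_card.
  by rewrite subsetI !cycle_subG bn !mem_cycle -bn mem_cycle.
rewrite -(leq_pmul2r I0) -M -mulnA leq_mul2l; apply/orP; right.
exact: hb.
Qed.

Lemma conjX_pow (gT : finGroupType) (a b : gT) k j :
  a ^ b = a ^+ k -> a ^ (b ^+ j) = a ^+ (k ^ j).
Proof.
move=> ab; elim: j => [|j IH]; first by rewrite expg0 conjg1 expn0 expg1.
by rewrite expgSr conjgM IH conjXg ab -expgM expnS mulnC.
Qed.

Lemma comm_conj (gT : finGroupType) (z b : gT) : commute z b -> z ^ b = z.
Proof. by move=> h; rewrite conjgE h mulKg. Qed.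
Arguments comm_conj {gT z b}.

Lemma center_iff (gT : finGroupType) (G : {group gT}) (a b : gT) k l m n :
  0 < k -> 0 < m -> 0 < n -> l * (k - 1) = 0 %[mod m] -> is_ind m k n ->
  <[a]> <*> <[b]> = G -> a ^+ m = 1 -> b ^+ n = a ^+ l -> a ^ b = a ^+ k ->
  #[a] = m ->
  ('Z(G) = 1 :> {set gT} <-> coprime (k - 1) m).
Proof.
move=> k0 m0 n0 lk [_ kn indm] Ga am bn ab oa.
have aG : a \in G by rewrite -Ga mem_gen // inE cycle_id.
have bG : b \in G by rewrite -Ga mem_gen // inE cycle_id ?orbT.
split.
- move=> Z1.
  set g := gcdn (k - 1) m.
  have g0 : 0 < g by rewrite gcdn_gt0 m0 orbT.
  set c := a ^+ (m %/ g).
  have cZ : c \in 'Z(G).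
    apply/centerP; split; first by rewrite groupX.
    have : G \subset 'C[c].
      rewrite -Ga join_subG !cycle_subG; apply/andP; split; apply/cent1P.
        exact: commuteX.
      apply: commute_sym; rewrite /commute conjgC; congr (_ * _).
      rewrite /c conjXg ab -expgM; apply/eqP; rewrite eq_expg_mod_order oa.
      have e : k = (k - 1) + 1 by rewrite subnK.
      rewrite {1}e mulnDl mul1n -{1}(divnK (dvdn_gcdl (k - 1) m)) -/g.
      rewrite -mulnA (mulnC g) (divnK (dvdn_gcdr (k - 1) m)) -/g.
      by rewrite -modnDml modnMl add0n.
    move=> sub y yG; have := subsetP sub y yG; move/cent1P => h.
    by rewrite /commute h.
  move: cZ; rewrite Z1 inE => /eqP c1.
  have : m %| m %/ g by rewrite -{1}oa order_dvdn -/c c1.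
  have gm : g <= m by rewrite dvdn_leq // dvdn_gcdr.
  move=> /dvdn_leq; rewrite divn_gt0 // => /(_ gm) h.
  rewrite /coprime -/g eqn_leq g0 andbT leqNgt; apply/negP => g1.
  by have := ltn_Pdiv g1 m0; rewrite ltnNge h.
- move=> cop.
  have ml : m %| l.
    rewrite -(Gauss_dvdl l (_ : coprime m (k - 1))); last by rewrite coprime_sym.
    by rewrite /dvdn lk mod0n.
  have b1 : b ^+ n = 1 by rewrite bn; apply/eqP; rewrite -order_dvdn oa.
  have nab : <[b]> \subset 'N(<[a]>).
    by rewrite cycle_subG inE -cycleJ ab cycle_subG mem_cycle.
  apply/trivgP/subsetP => z /centerP [zG zC]; rewrite inE.
  move: zG; rewrite -Ga norm_joinEr // => /mulsgP [x y /cycleP [i ->] /cycleP [j ->] zE]; subst z.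
  have zb := zC b bG.
  have ai : a ^+ i = 1.
    have := comm_conj zb; rewrite conjMg.
    have -> : (b ^+ j) ^ b = b ^+ j by apply: comm_conj; apply: commute_sym; apply: commuteX; apply: commute_refl.
    move/mulIg; rewrite conjXg ab -expgM => /eqP.
    rewrite eq_expg_mod_order oa => /eqP e.
    apply/eqP; rewrite -order_dvdn oa.
    have : m %| (k - 1) * i.
      rewrite mulnBl mul1n -eqn_mod_dvd; first by apply/eqP; rewrite e.
      exact: leq_pmull.
    by rewrite Gauss_dvdr // coprime_sym.
  rewrite ai mul1g -(expg_mod j b1).
  have jn : j %% n < n by rewrite ltn_pmod.
  set j' := j %% n in jn *.
  have za := zC a aG; rewrite ai mul1g -(expg_mod j b1) -/j' in za.
  have := comm_conj (commute_sym za); rewrite (conjX_pow _ _ _ _ _ ab) => /eqP.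
  rewrite -{2}(expg1 a) eq_expg_mod_order oa => /eqP kj.
  case: (posnP j') => [-> | jp]; first by rewrite expg0.
  by have := indm _ jp kj; rewrite leqNgt jn.
Qed.

End Grp.

Lemma order_a (gT : finGroupType) (G : {group gT}) (a b : gT) k l n' m' :
  0 < k -> k ^ n'.+1 = 1 %[mod m'.+1] -> l * (k - 1) = 0 %[mod m'.+1] ->
  (G \isog Grp (a : b : (a ^+ m'.+1 = 1, b ^+ n'.+1 = a ^+ l, a ^ b = a ^+ k)))%g ->
  (<[a]> <*> <[b]> = G)%g -> (a ^+ m'.+1 = 1)%g -> (b ^+ n'.+1 = a ^+ l)%g -> (a ^ b = a ^+ k)%g ->
  #[a]%g = m'.+1.
Proof.
move=> k0 kn lk iso Ga am bn ab.
have HG : (H n' m' k l kn \homg G)%g by rewrite (iso _ (H n' m' k l kn)); apply: H_hom.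
have c1 := leq_homg HG.
have c2 := H_card n' m' k l kn.
have c3 := @card_bound _ _ _ _ _ _ _ (ltn0Sn n') Ga bn ab.
have h : m'.+1 <= #[a]%g.
  by rewrite -(leq_pmul2l (ltn0Sn n')) (leq_trans c2) // (leq_trans c1) // mulnC.
apply/eqP; rewrite eqn_leq h andbT dvdn_leq //.
by rewrite order_dvdn am.
Qed.

Theorem lemma2p4 (k l m n : nat) (gT : finGroupType) (G : {group gT}) :
  (0 < k)%N -> (0 < l)%N -> (0 < m)%N -> (0 < n)%N ->
  k ^ n = 1 %[mod m] -> l * (k - 1) = 0 %[mod m] ->
  (G \isog Grp (a : b : (a ^+ m = 1, b ^+ n = a ^+ l, a ^ b = a ^+ k)))%g ->
  ((0%R \in Rset k m n) /\ (0%R \in Lset k m n)) /\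
  (is_ind m k n ->
     ((('Z(G))%g = 1%g :> {set gT}) <-> has (unit_mod m) (Rset k m n)) /\
     (has (unit_mod m) (Rset k m n) <-> has (unit_mod m) (Lset k m n))).
Proof.
move=> k0 l0 m0 n0 kn lk iso.
split.
  by split; apply/mapP; exists 0%N; rewrite ?mem_iota ?add0n ?n0 // expr0 ?subrr mod0z.
move=> ind.
have [a [b [Ga am bn ab]]] : exists a b : gT,
    [/\ (<[a]> <*> <[b]> = G)%g, (a ^+ m = 1)%g, (b ^+ n = a ^+ l)%g & (a ^ b = a ^+ k)%g].
  have := isoGrp_hom iso; move=> /existsP [[a b]] /=.
  rewrite !xpair_eqE /= => /and4P [/eqP Ga /eqP am /eqP bn /eqP ab].
  by exists a, b.
have oa : #[a]%g = m.
  have [n' en] : exists n', n = n'.+1 by case: n n0 {kn bn iso ind} => // n' _; exists n'.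
  have [m' em] : exists m', m = m'.+1 by case: m m0 {kn lk am iso ind} => // m' _; exists m'.
  subst n m; exact: order_a k0 kn lk iso Ga am bn ab.
rewrite hasL // hasR //; split; last by [].
exact: (@center_iff _ _ _ _ _ _ _ _) k0 m0 n0 lk ind Ga am bn ab oa.
Qed.
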